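(* Let $\mathbb{F}$ be any field and let $C \subseteq \mathbb{F}^n$ be a subspace that is $\alpha$-non-overlapping for some $\alpha \ge 1$. Then every $M \in C \otimes C$ of rank at least $2$ satisfies $\|M\|_0 \ge \alpha \cdot d(C)^2$.
   Context: $\|\cdot\|_0$ counts nonzero entries. For a subspace $C \ne \{0\}$, $d(C) := \min_{u \in C\setminus\{0\}}\|u\|_0$ is its minimum distance. For subspaces $U \subseteq \mathbb{F}^n$, $V \subseteq \mathbb{F}^m$, $U \otimes V$ is the space of matrices $M \in \mathbb{F}^{n\times m}$ all of whose columns lie in $U$ and all of whose rows lie in $V$. A subspace $C\subseteq \mathbb{F}^n$ is $\alpha$-non-overlapping ($\alpha\ge 1$) if for any $u, v \in C$ linearly independent over $\mathbb{F}$, $|\mathrm{supp}(u)\cup\mathrm{supp}(v)| \ge \alpha \cdot d(C)$, where $\mathrm{supp}(u)$ is the set of nonzero coordinates of $u$. *)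

(* Defs.v *)
From HB Require Import structures.
From mathcomp Require Import all_boot all_order all_algebra.
Set Implicit Arguments. Unset Strict Implicit. Unset Printing Implicit Defensive.
Import Order.TTheory GRing.Theory Num.Theory.
Local Open Scope ring_scope.

Definition supp (F : fieldType) (n : nat) (u : 'rV[F]_n) : {set 'I_n} :=
  [set i | u 0 i != 0].

Definition wt (F : fieldType) (n : nat) (u : 'rV[F]_n) : nat := #|supp u|.

Definition mxwt (F : fieldType) (n m : nat) (M : 'M[F]_(n, m)) : nat :=
  #|[set ij : 'I_n * 'I_m | M ij.1 ij.2 != 0]|.

(* d is the minimum distance d(C) of C (C <> {0}): d is attained by a nonzero
   vector of C and every nonzero vector of C has weight >= d. *)
Definition is_min_dist (F : fieldType) (n : nat) (C : {vspace 'rV[F]_n}) (d : nat) : Prop :=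
  (exists2 u, u \in C & (u != 0) && (wt u == d)) /\
  (forall u, u \in C -> u != 0 -> (d <= wt u)%N).

Definition tensor_sp (F : fieldType) (n m : nat)
    (U : {vspace 'rV[F]_n}) (V : {vspace 'rV[F]_m}) (M : 'M[F]_(n, m)) : Prop :=
  (forall j : 'I_m, (col j M)^T \in U) /\ (forall i : 'I_n, row i M \in V).

Definition non_overlapping (F : fieldType) (n : nat) (R : realFieldType)
    (C : {vspace 'rV[F]_n}) (alpha : R) : Prop :=
  1 <= alpha /\
  forall d : nat, is_min_dist C d ->
  forall u v : 'rV[F]_n, u \in C -> v \in C -> free [:: u; v] ->
    alpha * d%:R <= (#|supp u :|: supp v|)%:R.

(* Main.v *)
Require Import Defs.
From HB Require Import structures.
From mathcomp Require Import all_boot all_order all_algebra.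
Import Order.TTheory GRing.Theory Num.Theory.
Local Open Scope ring_scope.

Lemma rank_le1 (F : fieldType) (n : nat) (M : 'M[F]_n) (w : 'rV[F]_n) :
  (forall i, exists k : F, row i M = k *: w) -> (\rank M <= 1)%N.
Proof.
move=> H; have: (M <= w)%MS.
  by apply/row_subP=> i; have [k ->] := H i; apply: scalemx_sub; exact: submx_refl.
by move/mxrankS/leq_trans; apply; apply: rank_leq_row.
Qed.

Lemma mxwt_sum (F : fieldType) (n : nat) (M : 'M[F]_n) :
  mxwt M = (\sum_j #|[set i | M i j != 0%R]|)%N.
Proof.
rewrite /mxwt -sum1dep_card.
rewrite -(pair_big_dep (fun _ => true) (fun i j => M i j != 0) (fun _ _ => 1%N)) /=.
rewrite (exchange_big_dep (fun _ => true)) //=.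
by apply: eq_bigr => j _; rewrite -sum1dep_card.
Qed.

Theorem lemma2p5 (F : fieldType) (n : nat) (R : realFieldType)
    (C : {vspace 'rV[F]_n}) (alpha : R) :
  1 <= alpha ->
  non_overlapping C alpha ->
  forall d : nat, is_min_dist C d ->
  forall M : 'M[F]_n, tensor_sp C C M -> (2 <= \rank M)%N ->
    alpha * (d ^ 2)%:R <= (mxwt M)%:R.
Proof.
move=> _ [_ NO] d Hd M [Hcol Hrow] Hrk.
have [i1 Hv] : exists i1, row i1 M != 0.
  case/boolP: [exists i, row i M != 0] => [/existsP//|]; rewrite negb_exists => /forallP H0.
  suff: (\rank M <= 1)%N by rewrite leqNgt (leq_trans _ Hrk).
  apply: (@rank_le1 _ _ _ 0) => i; exists 0; rewrite scaler0.
  by move: (H0 i); rewrite negbK => /eqP.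
have [i2 Hu] : exists i2, row i2 M \notin <[row i1 M]>%VS.
  case/boolP: [exists i, row i M \notin <[row i1 M]>%VS] => [/existsP//|]; rewrite negb_exists => /forallP H0.
  suff: (\rank M <= 1)%N by rewrite leqNgt (leq_trans _ Hrk).
  apply: (@rank_le1 _ _ _ (row i1 M)) => i.
  by move: (H0 i); rewrite negbK => /vlineP.
set u := row i2 M; set v := row i1 M.
have Hfree : free [:: u; v] by rewrite free_cons seq1_free span_seq1 Hu Hv.
have H1 := NO d Hd u v (Hrow _) (Hrow _) Hfree.
set S := [set j | [exists i, M i j != 0]].
have HS : (#|supp u :|: supp v| <= #|S|)%N.
  apply: subset_leq_card; apply/subsetP => j.
  rewrite in_setU !inE /u /v !mxE => /orP [] H; apply/existsP; eexists; exact: H.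
have HW : (#|S| * d <= mxwt M)%N.
  rewrite mxwt_sum -sum1_card big_distrl /=.
  rewrite [X in (_ <= X)%N](bigID (fun j => j \in S)) /= -[X in (X <= _)%N]addn0.
  apply: leq_add => //; apply: leq_sum => j; rewrite mul1n inE => /existsP [i Hi].
  have -> : [set i | M i j != 0] = supp (col j M)^T.
    by apply/setP => k; rewrite !inE !mxE.
  apply: (proj2 Hd) (Hcol j) _.
  by apply/eqP => /matrixP /(_ 0 i); rewrite !mxE => /eqP; rewrite (negbTE Hi).
have H2 : alpha * d%:R <= (#|S|)%:R.
  by apply: (le_trans H1); rewrite ler_nat.
apply: (le_trans (y := (#|S| * d)%N%:R)); last by rewrite ler_nat.
rewrite natrX expr2 mulrA natrM ler_wpM2r //.
Qed.
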